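(* The Clebsch graph has odd girth $5$, and it admits an orientation in which every $5$-cycle is alternating.
   Context: The Clebsch graph (Greenwood–Gleason graph) is the $5$-regular graph on vertex set $\{0,1\}^4$ in which two vectors are adjacent iff they differ in exactly one coordinate or in all four coordinates. The odd girth is the length of a shortest odd cycle. An orientation assigns each edge exactly one direction. In an oriented graph, a subgraph that is a cycle is called alternating if at most one of its vertices has both positive in-degree and positive out-degree within that cycle. *)

(* Defs.v *)
From mathcomp Require Import all_boot.
Set Implicit Arguments. Unset Strict Implicit. Unset Printing Implicit Defensive.

Definition V := {ffun 'I_4 -> bool}.

Definition hdist (u v : V) : nat := #|[set i | u i != v i]|.

Definition clebsch : rel V := fun u v => (hdist u v == 1) || (hdist u v == 4).

Definition is_cycle (T : eqType) (adj : rel T) (c : seq T) : Prop :=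
  [/\ 3 <= size c, uniq c & cycle adj c].

Definition odd_girth (T : eqType) (adj : rel T) (k : nat) : Prop :=
  (exists c, [/\ is_cycle adj c, odd (size c) & size c = k]) /\
  (forall c, is_cycle adj c -> odd (size c) -> k <= size c).

Definition orientation (T : eqType) (adj : rel T) (o : rel T) : Prop :=
  (forall u v, o u v -> adj u v) /\
  (forall u v, adj u v -> (o u v (+) o v u)).

(* Within the cycle c, vertex x has positive in-degree and positive out-degree
   (its cycle-neighbours are prev c x and next c x). *)
Definition mixed_in (T : eqType) (o : rel T) (c : seq T) (x : T) : bool :=
  (o (prev c x) x || o (next c x) x) && (o x (prev c x) || o x (next c x)).

Definition alternating (T : eqType) (o : rel T) (c : seq T) : Prop :=
  count (mixed_in o c) c <= 1.

(* Main.v *)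
Require Import Defs.
From mathcomp Require Import all_boot.

Lemma hdistE u v : hdist u v = \sum_(i < 4) (u i != v i).
Proof.
rewrite /hdist cardsE -sum1_card big_mkcond /=; apply: eq_bigr => i _.
by rewrite unfold_in; case: (u i != v i).
Qed.

Lemma sum4 (F : 'I_4 -> nat) : \sum_(i < 4) F i = F ord0 + F (inord 1) + F (inord 2) + F (inord 3).
Proof.
rewrite !big_ord_recr big_ord0 /= add0n.
by congr (_ + _ + _ + _); congr F; apply: val_inj; rewrite /= ?inordK.
Qed.

Definition B4 := (bool * bool * bool * bool)%type.
Definition bits (u : V) : B4 := (u ord0, u (inord 1), u (inord 2), u (inord 3)).

Lemma bits_inj : injective bits.
Proof.
move=> u v [h0 h1 h2 h3]; apply/ffunP => -[[|[|[|[|k]]]] Hi].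
- by have -> : Ordinal Hi = ord0 by apply: val_inj.
- by have -> : Ordinal Hi = inord 1 by apply: val_inj; rewrite /= inordK.
- by have -> : Ordinal Hi = inord 2 by apply: val_inj; rewrite /= inordK.
- by have -> : Ordinal Hi = inord 3 by apply: val_inj; rewrite /= inordK.
- by [].
Qed.

Definition cbn (x y : B4) : bool :=
  let: (x0, x1, x2, x3) := x in let: (y0, y1, y2, y3) := y in
  let d := ((x0 != y0) + (x1 != y1) + (x2 != y2) + (x3 != y3))%N in
  (d == 1) || (d == 4).

Definition cb (x y : B4) : bool :=
  let: (x0, x1, x2, x3) := x in let: (y0, y1, y2, y3) := y in
  let a := xorb x0 y0 in let b := xorb x1 y1 in let c := xorb x2 y2 in let d := xorb x3 y3 in
  (a && b && c && d) || (a && ~~b && ~~c && ~~d) || (~~a && b && ~~c && ~~d)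
  || (~~a && ~~b && c && ~~d) || (~~a && ~~b && ~~c && d).

Lemma cbE x y : cbn x y = cb x y.
Proof. by case: x => [[[[] []] []] []]; case: y => [[[[] []] []] []]. Qed.

Lemma clebschE u v : clebsch u v = cb (bits u) (bits v).
Proof. by rewrite -cbE /clebsch hdistE sum4. Qed.

Definition eqB (x y : B4) : bool :=
  let: (x0, x1, x2, x3) := x in let: (y0, y1, y2, y3) := y in
  ~~ (xorb x0 y0 || xorb x1 y1 || xorb x2 y2 || xorb x3 y3).

Lemma eqBE x y : eqB x y = (x == y).
Proof. by case: x => [[[[] []] []] []]; case: y => [[[[] []] []] []]. Qed.

Definition arcb (x y : B4) : bool :=
  match x, y with
  | (false, false, false, false), (true, false, false, false) => true
  | (false, false, false, false), (false, true, false, false) => true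
  | (false, false, false, false), (false, false, true, false) => true
  | (false, false, false, false), (false, false, false, true) => true
  | (false, false, false, false), (true, true, true, true) => true
  | (true, false, false, false), (true, true, false, false) => true
  | (true, false, false, false), (true, false, true, false) => true
  | (true, false, false, false), (true, false, false, true) => true
  | (true, false, false, false), (false, true, true, true) => true
  | (false, true, false, false), (true, true, false, false) => true
  | (false, true, true, false), (false, true, false, false) => true
  | (false, true, false, true), (false, true, false, false) => true
  | (true, false, true, true), (false, true, false, false) => true
  | (true, true, true, false), (true, true, false, false) => true
  | (true, true, false, true), (true, true, false, false) => true
  | (false, false, true, true), (true, true, false, false) => true
  | (false, false, true, false), (true, false, true, false) => true
  | (false, true, true, false), (false, false, true, false) => true
  | (true, true, false, true), (false, false, true, false) => true
  | (false, false, true, true), (false, false, true, false) => true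
  | (true, true, true, false), (true, false, true, false) => true
  | (false, true, false, true), (true, false, true, false) => true
  | (true, false, true, true), (true, false, true, false) => true
  | (false, true, true, false), (true, true, true, false) => true
  | (false, true, true, false), (true, false, false, true) => true
  | (false, true, true, false), (false, true, true, true) => true
  | (true, true, true, false), (false, false, false, true) => true
  | (true, true, true, false), (true, true, true, true) => true
  | (false, false, false, true), (true, false, false, true) => true
  | (false, true, false, true), (false, false, false, true) => true
  | (false, false, true, true), (false, false, false, true) => true
  | (true, true, false, true), (true, false, false, true) => true
  | (true, false, true, true), (true, false, false, true) => true
  | (false, true, false, true), (true, true, false, true) => true
  | (false, true, false, true), (false, true, true, true) => true
  | (true, true, false, true), (true, true, true, true) => true
  | (false, false, true, true), (true, false, true, true) => true
  | (false, false, true, true), (false, true, true, true) => true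
  | (true, false, true, true), (true, true, true, true) => true
  | (false, true, true, true), (true, true, true, true) => true
  | _, _ => false
  end.

Definition ori : rel V := fun u v => arcb (bits u) (bits v).

Definition enumB : seq B4 := [:: 
 (false,false,false,false); (true,false,false,false); (false,true,false,false); (true,true,false,false);
 (false,false,true,false); (true,false,true,false); (false,true,true,false); (true,true,true,false);
 (false,false,false,true); (true,false,false,true); (false,true,false,true); (true,true,false,true);
 (false,false,true,true); (true,false,true,true); (false,true,true,true); (true,true,true,true)].

Lemma mem_enumB x : x \in enumB.
Proof. by case: x => [[[[] []] []] []]. Qed.

Lemma allB (P : pred B4) : all P enumB -> forall x, P x.
Proof. by move=> /allP H x; apply: H; apply: mem_enumB. Qed.
Arguments allB {P} _ x.

Definition mixed (o : rel B4) (x p n : B4) : bool :=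
  (o p x || o n x) && (o x p || o x n).

Definition M5 (o : rel B4) (a b c d e : B4) : bool :=
  let m := [:: mixed o a e b; mixed o b a c; mixed o c b d; mixed o d c e; mixed o e d a] in
  (count id m <= 1)%N.

Lemma no_tri : all (fun a => all (fun b => cb a b ==> all (fun c => cb b c ==> ~~ cb c a) enumB) enumB) enumB.
Proof. by []. Qed.

Lemma ori_ok : all (fun x => all (fun y => (arcb x y ==> cb x y) && (cb x y ==> (arcb x y (+) arcb y x))) enumB) enumB.
Proof. by []. Qed.

Lemma five_ok : all (fun a => all (fun b => cb a b ==> all (fun c => cb b c ==>
  all (fun d => cb c d ==> all (fun e => cb d e ==> cb e a ==>
  ~~ eqB a c ==> ~~ eqB a d ==> ~~ eqB b d ==> ~~ eqB b e ==> ~~ eqB c e ==> M5 arcb a b c d e) enumB) enumB) enumB) enumB) enumB.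
Proof. by []. Qed.

Definition mkV (x : B4) : V := [ffun i : 'I_4 =>
  let: (x0, x1, x2, x3) := x in
  match val i with 0 => x0 | 1 => x1 | 2 => x2 | _ => x3 end].

Lemma bits_mkV x : bits (mkV x) = x.
Proof. by rewrite /bits !ffunE /= !inordK //; case: x => [[[? ?] ?] ?]. Qed.

Lemma neqE (a b : V) : (a != b) = ~~ eqB (bits a) (bits b).
Proof. by rewrite eqBE (inj_eq bits_inj). Qed.

Lemma cycle5_alt (a b c d e : V) : uniq [:: a; b; c; d; e] ->
  cycle clebsch [:: a; b; c; d; e] -> alternating ori [:: a; b; c; d; e].
Proof.
move=> U C.
have := U; rewrite /= !inE !negb_or !andbT -!andbA => /andP [ab /andP [ac /andP [ad /andP [ae /andP [bc /andP [bd /andP [be /andP [cd /andP [ce de]]]]]]]]].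
have ba : b != a by rewrite eq_sym.
have ca : c != a by rewrite eq_sym.
have da : d != a by rewrite eq_sym.
have ea : e != a by rewrite eq_sym.
have cb' : c != b by rewrite eq_sym.
have db : d != b by rewrite eq_sym.
have eb : e != b by rewrite eq_sym.
have dc : d != c by rewrite eq_sym.
have ec : e != c by rewrite eq_sym.
have ed : e != d by rewrite eq_sym.
move: C; rewrite /= !clebschE !andbT => /andP [Hab /andP [Hbc /andP [Hcd /andP [Hde Hea]]]].
have H1 := allB (allB five_ok (bits a)) (bits b); cbv beta in H1.
rewrite Hab implyTb in H1.
have H2 := allB H1 (bits c); cbv beta in H2; rewrite Hbc implyTb in H2.
have H3 := allB H2 (bits d); cbv beta in H3; rewrite Hcd implyTb in H3.
have H4 := allB H3 (bits e); cbv beta in H4.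
rewrite Hde Hea -!neqE ac ad bd be ce !implyTb in H4.
rewrite /alternating /mixed_in /next /prev /=.
rewrite !eqxx !(negbTE ab, negbTE ac, negbTE ad, negbTE ae, negbTE bc, negbTE bd, negbTE be,
  negbTE cd, negbTE ce, negbTE de, negbTE ba, negbTE ca, negbTE da, negbTE ea, negbTE cb',
  negbTE db, negbTE eb, negbTE dc, negbTE ec, negbTE ed) /=.
exact: H4.
Qed.

Lemma mkV_inj : injective mkV.
Proof. exact: (can_inj bits_mkV). Qed.

Definition s5 : seq B4 :=
  [:: (false,false,false,false); (true,false,false,false); (true,true,false,false);
      (true,true,true,false); (true,true,true,true)].

Theorem mainTheorem12 :
  odd_girth clebsch 5 /\
  exists o : rel V, orientation clebsch o /\
    forall c : seq V, is_cycle clebsch c -> size c = 5 -> alternating o c.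
Proof.
split; [split|].
- exists (map mkV s5); split => //; split => //.
  + by rewrite (map_inj_uniq mkV_inj).
  + rewrite cycle_map (@eq_cycle _ _ cb) //.
    by move=> x y; rewrite /= clebschE !bits_mkV.
- case=> [|a [|b [|d [|x [|y s]]]]] [] //= _ U C _.
  move: C; rewrite /= !clebschE !andbT => /andP [Hab /andP [Hbd Hda]].
  have H1 := allB (allB no_tri (bits a)) (bits b); cbv beta in H1.
  rewrite Hab implyTb in H1.
  have H2 := allB H1 (bits d); cbv beta in H2.
  by rewrite Hbd Hda in H2.
- exists ori; split; first split.
  + move=> u v H; rewrite clebschE.
    have := allB (allB ori_ok (bits u)) (bits v); cbv beta.
    by case/andP => /implyP I _; exact: I H.
  + move=> u v; rewrite clebschE => H.
    have := allB (allB ori_ok (bits u)) (bits v); cbv beta.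
    by rewrite H => /andP [].
  + case=> [|a [|b [|c [|d [|e [|x s]]]]]] [] //= _ U C _.
    exact: cycle5_alt.
Qed.
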